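(* For every $I\subset\{1,\dots,g\}$, the element $\phi(\theta_I^2)\in\mathrm{Hom}(H,\mathfrak{p}(3))$ lies in $\mathrm{Der}_2\mathfrak{p}$.
   Context: $H$ is a $2g$-dimensional $\mathbb{Q}$-vector space with symplectic basis $a_1,b_1,\dots,a_g,b_g$ and symplectic form $\theta$, also viewed as $\theta=\sum_i a_i\wedge b_i$; $\theta_I=\sum_{i\in I}a_i\wedge b_i$. $\mathfrak{p}=\bigoplus_m\mathfrak{p}(m)$ is the graded Lie algebra $\mathbb{L}(H)/(\sum_i[a_i,b_i])$, $\mathbb{L}(H)$ the free Lie algebra on $H$ graded by bracket length. $\phi:\mathrm{Sym}^2\Lambda^2H\to\mathrm{Hom}(H,\mathfrak{p}(3))$ sends $(u_1\wedge v_1)(u_2\wedge v_2)$ to $x\mapsto \theta(u_1,x)[v_1,[u_2,v_2]]-\theta(v_1,x)[u_1,[u_2,v_2]]+\theta(u_2,x)[v_2,[u_1,v_1]]-\theta(v_2,x)[u_2,[u_1,v_1]]$. $\mathrm{Der}_n\mathfrak{p}\subset\mathrm{Hom}(\mathfrak{p}(1),\mathfrak{p}(n+1))$ is the space of homomorphisms that extend to a derivation of $\mathfrak{p}$ of degree $n$, i.e. the kernel of the map $\mathrm{Hom}(\mathfrak{p}(1),\mathfrak{p}(n+1))\to\mathfrak{p}(n+2)$ sending $\psi$ to $\sum_i([\psi(a_i),b_i]+[a_i,\psi(b_i)])$. *)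

(* Defs.v *)
From mathcomp Require Import all_boot all_order all_algebra.
Set Implicit Arguments. Unset Strict Implicit. Unset Printing Implicit Defensive.
Import Order.TTheory GRing.Theory Num.Theory.
Local Open Scope ring_scope.

(* The symplectic basis of H is indexed by 'I_g * bool:
   (i, false) is a_(i+1) and (i, true) is b_(i+1). *)
Definition letter (g : nat) := ('I_g * bool)%type.

(* The (completed) tensor algebra T(H) over Q: functions from words in the
   basis letters to rat; a word [:: c1; ...; cn] stands for c1 ⊗ ... ⊗ cn. *)
Definition tens (g : nat) := seq (letter g) -> rat.

Definition tadd g (u v : tens g) : tens g := fun w => u w + v w.
Definition tscale g (c : rat) (u : tens g) : tens g := fun w => c * u w.
Definition tmul g (u v : tens g) : tens g :=
  fun w => \sum_(k < (size w).+1) u (take k w) * v (drop k w).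
Definition tbr g (u v : tens g) : tens g :=
  tadd (tmul u v) (tscale (-1) (tmul v u)).
Definition tlet g (c : letter g) : tens g :=
  fun w => if w == [:: c] then 1 else 0.

Definition a_ g (i : 'I_g) : letter g := (i, false).
Definition b_ g (i : 'I_g) : letter g := (i, true).

Definition omega g : tens g :=
  fun w => \sum_(i < g) tbr (tlet (a_ i)) (tlet (b_ i)) w.

(* The free Lie algebra L(H), realised as the Lie subalgebra of T(H)
   generated by H (standard model of the free Lie algebra). *)
Inductive lie_elt g : tens g -> Prop :=
  | lie_gen (c : letter g) : lie_elt (tlet c)
  | lie_add u v : lie_elt u -> lie_elt v -> lie_elt (tadd u v)
  | lie_scale (c : rat) u : lie_elt u -> lie_elt (tscale c u)
  | lie_br u v : lie_elt u -> lie_elt v -> lie_elt (tbr u v).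

(* The Lie ideal of L(H) generated by omega; p = L(H) / lie_ideal. *)
Inductive lie_ideal g : tens g -> Prop :=
  | id_gen : lie_ideal (@omega g)
  | id_add u v : lie_ideal u -> lie_ideal v -> lie_ideal (tadd u v)
  | id_scale (c : rat) u : lie_ideal u -> lie_ideal (tscale c u)
  | id_br u v : lie_elt u -> lie_ideal v -> lie_ideal (tbr u v).

Definition homog g (n : nat) (u : tens g) : Prop :=
  forall w, size w != n -> u w = 0.

Definition theta g (c d : letter g) : rat :=
  if c.1 == d.1 then
    (if ~~ c.2 && d.2 then 1 else if c.2 && ~~ d.2 then -1 else 0)
  else 0.

(* A linear map H -> p(3) given by its values on the basis (representatives
   in L(H) of degree 3).  psi lies in Der_2 p iff its values are Lie elements
   of degree 3 and sum_i ([psi a_i, b_i] + [a_i, psi b_i]) = 0 in p(4),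
   i.e. lies in the ideal generated by omega. *)
Definition in_Der2 g (psi : letter g -> tens g) : Prop :=
  (forall c, lie_elt (psi c) /\ homog 3 (psi c)) /\
  lie_ideal (fun w => \sum_(i < g)
      tadd (tbr (psi (a_ i)) (tlet (b_ i))) (tbr (tlet (a_ i)) (psi (b_ i))) w).

(* phi((u1 ∧ v1)(u2 ∧ v2)) evaluated at x, for basis vectors u1 v1 u2 v2 x *)
Definition phi_dec g (u1 v1 u2 v2 x : letter g) : tens g :=
  fun w =>
    theta u1 x * tbr (tlet v1) (tbr (tlet u2) (tlet v2)) w
  - theta v1 x * tbr (tlet u1) (tbr (tlet u2) (tlet v2)) w
  + theta u2 x * tbr (tlet v2) (tbr (tlet u1) (tlet v1)) w
  - theta v2 x * tbr (tlet u2) (tbr (tlet u1) (tlet v1)) w.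

(* theta_I^2 = sum_{i,j in I} (a_i ∧ b_i)(a_j ∧ b_j) in Sym^2 Λ^2 H, so by
   linearity phi(theta_I^2)(x) = sum_{i,j in I} phi((a_i∧b_i)(a_j∧b_j))(x). *)
Definition phi_thetaI2 g (I : {set 'I_g}) (x : letter g) : tens g :=
  fun w => \sum_(i in I) \sum_(j in I) phi_dec (a_ i) (b_ i) (a_ j) (b_ j) x w.

(* Main.v *)
Require Import Defs.
From HB Require Import structures.
From mathcomp Require Import all_boot all_order all_algebra.
From mathcomp Require Import boolp zify.
Set Implicit Arguments. Unset Strict Implicit. Unset Printing Implicit Defensive.
Import Order.TTheory GRing.Theory Num.Theory.
Local Open Scope ring_scope.

Definition R g := tens g.
HB.instance Definition _ g := gen_eqMixin (R g).
HB.instance Definition _ g := gen_choiceMixin (R g).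


Section Basic.
Variable g : nat.
Implicit Types u v x : tens g.

Lemma tmul_nil u v : tmul u v [::] = u [::] * v [::].
Proof. by rewrite /tmul big_ord1. Qed.

Lemma tmul_cons u v c w :
  tmul u v (c :: w) = u [::] * v (c :: w) + tmul (fun w' => u (c :: w')) v w.
Proof. by rewrite /tmul /= big_ord_recl. Qed.

Lemma tmul_linl (a : rat) u v x w :
  tmul (fun w' => a * u w' + v w') x w = a * tmul u x w + tmul v x w.
Proof.
rewrite /tmul mulr_sumr -big_split /=; apply: eq_bigr => k _.
by rewrite mulrDl mulrA.
Qed.

Lemma tmulA_pt w : forall u v x, tmul (tmul u v) x w = tmul u (tmul v x) w.
Proof.
elim: w => [|c w IH] u v x; first by rewrite !tmul_nil mulrA.
rewrite !tmul_cons tmul_nil.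
have -> : (fun w' => tmul u v (c :: w')) =
   (fun w' => u [::] * v (c :: w') + tmul (fun w'' => u (c :: w'')) v w').
  by apply: funext => w'; rewrite tmul_cons.
by rewrite tmul_linl IH mulrDr !addrA mulrA.
Qed.

Definition tone : tens g := fun w => if w == [::] then 1 else 0.
Definition tzero : tens g := fun _ => 0.

Lemma tmul0l v w : tmul tzero v w = 0.
Proof. by rewrite /tmul big1 // => k _; rewrite /tzero mul0r. Qed.

Lemma tmul1l v w : tmul tone v w = v w.
Proof.
case: w => [|c w]; first by rewrite tmul_nil /tone eqxx mul1r.
rewrite tmul_cons /tone eqxx mul1r.
have -> : (fun w' => if c :: w' == [::] then (1:rat) else 0) = tzero by apply: funext.
by rewrite tmul0l addr0.
Qed.

Lemma tmul1r_pt w : forall u, tmul u tone w = u w.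
Proof.
elim: w => [|c w IH] u; first by rewrite tmul_nil /tone eqxx mulr1.
by rewrite tmul_cons IH /tone /= mulr0 add0r.
Qed.
End Basic.

Section Inst.
Variable g : nat.
Lemma taddA : associative (@tadd g).
Proof. by move=> u v x; apply: funext => w; rewrite /tadd addrA. Qed.
Lemma taddC : commutative (@tadd g).
Proof. by move=> u v; apply: funext => w; rewrite /tadd addrC. Qed.
Lemma tadd0 : left_id (@tzero g) (@tadd g).
Proof. by move=> u; apply: funext => w; rewrite /tadd /tzero add0r. Qed.
Lemma taddN : left_inverse (@tzero g) (tscale (-1)) (@tadd g).
Proof. by move=> u; apply: funext => w; rewrite /tadd /tscale /tzero mulN1r addNr. Qed.
End Inst.

HB.instance Definition _ g := GRing.isZmodule.Build (R g) (@taddA g) (@taddC g) (@tadd0 g) (@taddN g).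

Section Inst2.
Variable g : nat.
Lemma tmulA : associative (@tmul g : R g -> R g -> R g).
Proof. by move=> u v x; apply: funext => w; rewrite tmulA_pt. Qed.
Lemma tmul1 : left_id (@tone g : R g) (@tmul g).
Proof. by move=> u; apply: funext => w; rewrite tmul1l. Qed.
Lemma tmul1' : right_id (@tone g : R g) (@tmul g).
Proof. by move=> u; apply: funext => w; rewrite tmul1r_pt. Qed.
Lemma tmulDl : left_distributive (@tmul g : R g -> R g -> R g) +%R.
Proof. move=> u v x; apply: funext => w; change (tmul (tadd u v) x w = tmul u x w + tmul v x w).
by rewrite /tmul -big_split; apply: eq_bigr => k _; rewrite /tadd mulrDl. Qed.
Lemma tmulDr : right_distributive (@tmul g : R g -> R g -> R g) +%R.
Proof. move=> u v x; apply: funext => w; change (tmul u (tadd v x) w = tmul u v w + tmul u x w).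
by rewrite /tmul -big_split; apply: eq_bigr => k _; rewrite /tadd mulrDr. Qed.
Lemma tone_neq0 : (@tone g : R g) != 0.
Proof. by apply/eqP => /(congr1 (fun f : R g => f [::])); rewrite /tone eqxx => /eqP; rewrite oner_eq0. Qed.
End Inst2.

HB.instance Definition _ g := GRing.Zmodule_isNzRing.Build (R g) (@tmulA g) (@tmul1 g) (@tmul1' g) (@tmulDl g) (@tmulDr g) (@tone_neq0 g).

Section Inst3.
Variable g : nat.
Local Notation R := (R g).
Lemma tscaleA a b (v : R) : tscale a (tscale b v) = tscale (a * b) v.
Proof. by apply: funext => w; rewrite /tscale mulrA. Qed.
Lemma tscale1 : left_id 1 (@tscale g : rat -> R -> R).
Proof. by move=> v; apply: funext => w; rewrite /tscale mul1r. Qed.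
Lemma tscaleDr : right_distributive (@tscale g : rat -> R -> R) +%R.
Proof. by move=> a u v; apply: funext => w; rewrite /tscale /= /tadd mulrDr. Qed.
Lemma tscaleDl (v : R) (a b : rat) : tscale (a + b) v = (tscale a v : R) + tscale b v.
Proof. by  apply: funext => w; rewrite /tscale /= /tadd mulrDl. Qed.
End Inst3.
HB.instance Definition _ g := GRing.Zmodule_isLmodule.Build rat (R g) (@tscaleA g) (@tscale1 g) (@tscaleDr g) (@tscaleDl g).

Section Inst4.
Variable g : nat.
Local Notation R := (R g).
Lemma tscaleAl (a : rat) (u v : R) : a *: (u * v) = (a *: u) * v.
Proof.
apply: funext => w; change (a * tmul u v w = tmul (tscale a u) v w).
by rewrite /tmul mulr_sumr; apply: eq_bigr => k _; rewrite /tscale mulrA.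
Qed.
End Inst4.
HB.instance Definition _ g := GRing.Lmodule_isLalgebra.Build rat (R g) (@tscaleAl g).
Section Inst5.
Variable g : nat.
Local Notation R := (R g).
Lemma tscaleAr (a : rat) (u v : R) : a *: (u * v) = u * (a *: v).
Proof.
apply: funext => w; change (a * tmul u v w = tmul u (tscale a v) w).
by rewrite /tmul mulr_sumr; apply: eq_bigr => k _; rewrite /tscale mulrCA.
Qed.
End Inst5.
HB.instance Definition _ g := GRing.Lalgebra_isAlgebra.Build rat (R g) (@tscaleAr g).


Section Main.
Variable g : nat.
Local Notation R := (R g).
Implicit Types u v : R.

Lemma tbrE u v : tbr u v = u * v - v * u.
Proof. by []. Qed.
Lemma evalD u v w : (u + v) w = u w + v w. Proof. by []. Qed.
Lemma evalN u w : (- u) w = - u w. Proof. by change (-1 * u w = - u w); rewrite mulN1r. Qed.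
Lemma evalZ (a : rat) u w : (a *: u) w = a * u w. Proof. by []. Qed.
Lemma eval0 w : (0 : R) w = 0. Proof. by []. Qed.
Lemma sum_eval (I : Type) (r : seq I) (P : pred I) (F : I -> R) w :
  (\sum_(i <- r | P i) F i) w = \sum_(i <- r | P i) F i w.
Proof. exact: (big_morph (fun f : R => f w) (fun u v => evalD u v w) (eval0 w)). Qed.

Lemma lie0 (c : letter g) : lie_elt (0 : R).
Proof.
have -> : (0 : R) = tscale 0 (tlet c) by apply: funext => w; rewrite /tscale mul0r.
by apply: lie_scale; apply: lie_gen.
Qed.
Lemma lieD u v : lie_elt u -> lie_elt v -> lie_elt (u + v).
Proof. exact: lie_add. Qed.
Lemma lieZ (a : rat) u : lie_elt u -> lie_elt (a *: u).
Proof. exact: lie_scale. Qed.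
Lemma lieN u : lie_elt u -> lie_elt (- u).
Proof. exact: lie_scale. Qed.
Lemma lieB u v : lie_elt u -> lie_elt v -> lie_elt (u - v).
Proof. by move=> hu hv; apply: lieD => //; apply: lieN. Qed.
Lemma lieBr u v : lie_elt u -> lie_elt v -> lie_elt (u * v - v * u).
Proof. by rewrite -tbrE; apply: lie_br. Qed.
Lemma lie_sum (c : letter g) (J : Type) (r : seq J) (P : pred J) (F : J -> R) :
  (forall i, P i -> lie_elt (F i)) -> lie_elt (\sum_(i <- r | P i) F i).
Proof. by move=> H; apply: big_ind => //; [exact: lie0 c | exact: lieD]. Qed.

Lemma homog0 n : homog n (0 : R). Proof. by []. Qed.
Lemma homogD n u v : homog n u -> homog n v -> homog n (u + v).
Proof. by move=> hu hv w hw; rewrite evalD hu // hv // addr0. Qed.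
Lemma homogZ n (a : rat) u : homog n u -> homog n (a *: u).
Proof. by move=> hu w hw; rewrite evalZ hu // mulr0. Qed.
Lemma homogN n u : homog n u -> homog n (- u).
Proof. by move=> hu w hw; rewrite evalN hu // oppr0. Qed.
Lemma homogM m n u v : homog m u -> homog n v -> homog (m + n) (u * v).
Proof.
move=> hu hv w hw; change (tmul u v w = 0).
rewrite /tmul big1 // => k _.
have hk : (k <= size w)%N by rewrite -ltnS ltn_ord.
case: (eqVneq (size (take k w)) m) => hm; last by rewrite hu ?mul0r.
rewrite hv ?mulr0 //; rewrite size_drop; rewrite size_take in hm.
move: hm; case: ltnP => hkw hm; subst.
  by apply/eqP => e; move/eqP: hw; apply; lia.
by apply/eqP => e; move/eqP: hw; apply; lia.
Qed.
Lemma homogBr m n u v : homog m u -> homog n v -> homog (m + n) (u * v - v * u).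
Proof. by move=> hu hv; apply: homogD; [exact: homogM | apply: homogN; rewrite addnC; exact: homogM]. Qed.
Lemma homog_sum n (J : Type) (r : seq J) (P : pred J) (F : J -> R) :
  (forall i, P i -> homog n (F i)) -> homog n (\sum_(i <- r | P i) F i).
Proof. by move=> H; apply: big_ind => //; exact: homogD. Qed.
Lemma homog_let (c : letter g) : homog 1 (tlet c : R).
Proof. by move=> w hw; rewrite /tlet; case: eqP => // e; rewrite e in hw. Qed.
End Main.

Lemma zid (V : zmodType) (p q r s t u : V) :
  p - q - (r - s) + (t - p - (s - u)) = t - r - (q - u).
Proof.
rewrite !opprB addrACA [p - q + _]addrC subrKA [s - r + _]addrC subrKA.
by rewrite addrACA [RHS]addrACA (addrC (-q)).
Qed.
Lemma jac (A : nzRingType) (a b W : A) :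
  (a * W - W * a) * b - b * (a * W - W * a) + (a * (b * W - W * b) - (b * W - W * b) * a)
  = (a * b - b * a) * W - W * (a * b - b * a).
Proof. by rewrite !mulrBl !mulrBr !mulrA zid. Qed.

Section Psi.
Variable g : nat.
Variable I : {set 'I_g}.
Local Notation R := (R g).
Definition L (c : letter g) : R := tlet c.
Definition br (u v : R) : R := u * v - v * u.
Definition cc (j : 'I_g) : R := br (L (a_ j)) (L (b_ j)).
Definition W : R := \sum_(j in I) cc j.

Lemma psiE x : (phi_thetaI2 I x : R) = \sum_(i in I) \sum_(j in I)
  (theta (a_ i) x *: br (L (b_ i)) (cc j) - theta (b_ i) x *: br (L (a_ i)) (cc j)
 + theta (a_ j) x *: br (L (b_ j)) (cc i) - theta (b_ j) x *: br (L (a_ j)) (cc i)).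
Proof.
apply: funext => w; rewrite sum_eval; apply: eq_bigr => i _.
rewrite sum_eval; apply: eq_bigr => j _.
rewrite /phi_dec /cc /br /L !tbrE.
by do ![rewrite evalD|rewrite evalN|rewrite evalZ].


Qed.

Definition G x (i : 'I_g) : R :=
  theta (a_ i) x *: br (L (b_ i)) W - theta (b_ i) x *: br (L (a_ i)) W.

Lemma psiE2 x : (phi_thetaI2 I x : R) = (\sum_(i in I) G x i) *+ 2.
Proof.
pose F i j := theta (a_ i) x *: br (L (b_ i)) (cc j) - theta (b_ i) x *: br (L (a_ i)) (cc j).
rewrite psiE.
have -> : \sum_(i in I) \sum_(j in I)
  (theta (a_ i) x *: br (L (b_ i)) (cc j) - theta (b_ i) x *: br (L (a_ i)) (cc j)
 + theta (a_ j) x *: br (L (b_ j)) (cc i) - theta (b_ j) x *: br (L (a_ j)) (cc i))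
 = \sum_(i in I) \sum_(j in I) F i j + \sum_(i in I) \sum_(j in I) F j i.
  rewrite -big_split /=; apply: eq_bigr => i _; rewrite -big_split /=.
  by apply: eq_bigr => j _; rewrite /F addrA.
rewrite [X in _ + X]exchange_big /= mulr2n; congr (_ + _);
  apply: eq_bigr => i _; rewrite /F /G /W /br.
  by rewrite mulr_sumr mulr_suml -sumrB scaler_sumr mulr_sumr mulr_suml -sumrB scaler_sumr -sumrB.
by rewrite mulr_sumr mulr_suml -sumrB scaler_sumr mulr_sumr mulr_suml -sumrB scaler_sumr -sumrB.
Qed.

Lemma sumGa k : \sum_(i in I) G (a_ k) i = if k \in I then br (L (a_ k)) W else 0.
Proof.
have E i : G (a_ k) i = if i == k then br (L (a_ k)) W else 0.
  rewrite /G /theta /=; case: (eqVneq i k) => [->|_] /=.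
    by rewrite scale0r sub0r scaleN1r opprK.
  by rewrite !scale0r subr0.
rewrite (eq_bigr _ (fun i _ => E i)); case kI: (k \in I).
  rewrite (bigD1 k) //= eqxx big1 ?addr0 // => i /andP[_ /negbTE ->] //.
by apply: big1 => i iI; case: eqP => // ik; rewrite ik kI in iI.
Qed.
Lemma sumGb k : \sum_(i in I) G (b_ k) i = if k \in I then br (L (b_ k)) W else 0.
Proof.
have E i : G (b_ k) i = if i == k then br (L (b_ k)) W else 0.
  rewrite /G /theta /=; case: (eqVneq i k) => [->|_] /=.
    by rewrite scale0r subr0 scale1r.
  by rewrite !scale0r subr0.
rewrite (eq_bigr _ (fun i _ => E i)); case kI: (k \in I).
  rewrite (bigD1 k) //= eqxx big1 ?addr0 // => i /andP[_ /negbTE ->] //.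
by apply: big1 => i iI; case: eqP => // ik; rewrite ik kI in iI.
Qed.
End Psi.

Lemma summand_eq g (I : {set 'I_g}) (i : 'I_g) :
  br (phi_thetaI2 I (a_ i) : R g) (L (b_ i)) + br (L (a_ i)) (phi_thetaI2 I (b_ i))
  = (if i \in I then br (cc i) (W I) else 0) *+ 2.
Proof.
rewrite !psiE2 sumGa sumGb; case: (i \in I).
  by rewrite /br /cc -jac !mulrnAl !mulrnAr -!mulrnBl -mulrnDl.
by rewrite /br !mul0rn !mul0r !mulr0 !subrr.
Qed.

Theorem mainTheorem5 (g : nat) (I : {set 'I_g}) : in_Der2 (phi_thetaI2 I).
Proof.
split.
  move=> c; rewrite psiE; split.
    apply: (lie_sum c) => i _; apply: (lie_sum c) => j _.
    by repeat (apply: lieBr || apply: lieB || apply: lieD || apply: lieZ || apply: lie_gen).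
  apply: (@homog_sum g) => i _; apply: (@homog_sum g) => j _.
  have hb (x : letter g) (k : 'I_g) : homog 3 (br (L x) (cc k)).
    exact: (homogBr (m:=1) (n:=2) (homog_let x) (homogBr (homog_let _) (homog_let _))).
  by repeat (apply: hb || apply: homogD || apply: homogN || apply: homogZ).
have H0 : lie_ideal (tscale 0 (@omega g)) by apply: id_scale; apply: id_gen.
apply: (@eq_ind _ _ (@lie_ideal g) H0).
  apply: funext => w; rewrite /tscale mul0r; symmetry.
  transitivity ((\sum_(i < g) (br (phi_thetaI2 I (a_ i) : R g) (L (b_ i))
       + br (L (a_ i)) (phi_thetaI2 I (b_ i)))) w).
    by rewrite sum_eval.
  rewrite (eq_bigr _ (fun i _ => summand_eq I i)) sumrMnl -big_mkcond /=.
  rewrite /br sumrB -mulr_suml -mulr_sumr subrr mul0rn.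
  by [].
Qed.
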